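(* For GT systems $T_1=(\mathcal L,\mathcal R_1)$ and $T_2=(\mathcal L,\mathcal R_2)$ over a common label alphabet: $T_1\cong T_2$ implies $T_1\simeq_N T_2$, which implies $T_1\simeq_S T_2$, which implies $T_1\simeq_F T_2$. Moreover, none of the converse implications holds in general: there exist GT systems that are normalisation equivalent but not isomorphic, step-wise equivalent but not normalisation equivalent, and semantically equivalent but not step-wise equivalent.
   Context: Fix a label alphabet $\mathcal L=(\mathcal L_V,\mathcal L_E)$ of finite sets. A graph over $\mathcal L$ is $G=(V,E,s,t,l,m,p)$ with $V,E$ finite, $s,t:E\to V$ total, $l:V\rightharpoonup\mathcal L_V$ partial, $m:E\to\mathcal L_E$ total, $p:V\rightharpoonup\{0,1\}$ partial (rootedness). $G$ is a TLRG if $l,p$ are total. Morphisms preserve sources, targets, edge labels, and node labels and rootedness wherever defined; isomorphisms are bijective morphisms whose inverse is a morphism. $\mathcal G^{\oplus}(\mathcal L)$ is the set of isomorphism classes $[G]$ of TLRGs. A rule $r=\langle L\leftarrow K\rightarrow R\rangle$ consists of TLRGs $L,R$ and a graph $K$ that is a subgraph of both (sets included, $s,t,m$ restricted, $l_K\subseteq l_L$, $p_K\subseteq p_L$, likewise for $R$). Rule application to TLRG $G$ via an injective $g:L\to G$ satisfying the dangling condition (no edge outside $g(L)$ incident to a node of $g(V_L\setminus V_K)$): delete images of items of $L$ not in $K$, undefine label/rootedness of $g_V(v)$ where undefined for $v\in V_K$; add disjointly items of $R$ not in $K$, set label/rootedness of $g_V(v)$ to $l_R(v)/p_R(v)$ where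 undefined in $K$; $G\Rightarrow_r H$ if $H$ is isomorphic to the result. A GT system $T=(\mathcal L,\mathcal R)$ has a finite rule set $\mathcal R$. Rules $r_1,r_2$ are isomorphic ($r_1\cong r_2$) if there are isomorphisms $f:L_1\to L_2$, $g:R_1\to R_2$ with $f|_{K_1}=g|_{K_1}$ and $f(K_1)=K_2$. The normal form of $r$ is $r{\downarrow}=\langle L\leftarrow K'\rightarrow R\rangle$ with $K'$ having the nodes of $K$, no edges, and undefined labels and rootedness; $r_1\simeq r_2$ iff $r_1{\downarrow}\cong r_2{\downarrow}$. The induced relation $\to_T$ on $\mathcal G^{\oplus}(\mathcal L)$ is $[G]\to_T[H]$ iff $G\Rightarrow_{\mathcal R}H$. The semantic function $f_T:\mathcal G^{\oplus}(\mathcal L)\to\mathcal P(\mathcal G^{\oplus}(\mathcal L)\cup\{\bot\})$ maps $[G]$ to the set of normal forms of $[G]$ w.r.t. $\to_T$ (those $[H]$ with $[G]\to_T^*[H]$ and $[H]$ irreducible), together with $\bot$ iff there is an infinite $\to_T$-sequence starting at $[G]$. Then: $T_1\cong T_2$ iff $\mathcal R_1/{\cong}=\mathcal R_2/{\cong}$ (equal sets of isomorphism classes of rules); $T_1\simeq_N T_2$ iff $\mathcal R_1/{\simeq}=\mathcal R_2/{\simeq}$; $T_1\simeq_S T_2$ iff $\to_{T_1}=\to_{T_2}$; $T_1\simeq_F T_2$ iff $f_{T_1}=f_{T_2}$. *)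

(* Defs.v *)
From Stdlib Require List.
From mathcomp Require Import all_boot.

Set Implicit Arguments.
Unset Strict Implicit.
Unset Printing Implicit Defensive.

Section GT.
Variables (LV LE : finType).

(* Values of the maps outside
   gV / gE are irrelevant junk. *)
Record graph := Graph {
  gV : seq nat; gE : seq nat;
  gsrc : nat -> nat; gtgt : nat -> nat;
  glab : nat -> option LV; gelab : nat -> LE; groot : nat -> option bool }.

Definition wf (G : graph) : Prop :=
  forall e, e \in gE G -> gsrc G e \in gV G /\ gtgt G e \in gV G.

Definition TLRG (G : graph) : Prop :=
  wf G /\ forall v, v \in gV G -> glab G v <> None /\ groot G v <> None.

Definition morphism (G H : graph) (fV fE : nat -> nat) : Prop :=
  (forall v, v \in gV G -> fV v \in gV H) /\
  (forall e, e \in gE G ->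
     [/\ fE e \in gE H, gsrc H (fE e) = fV (gsrc G e),
         gtgt H (fE e) = fV (gtgt G e) & gelab H (fE e) = gelab G e]) /\
  (forall v a, v \in gV G -> glab G v = Some a -> glab H (fV v) = Some a) /\
  (forall v b, v \in gV G -> groot G v = Some b -> groot H (fV v) = Some b).

Definition iso_via (G H : graph) (fV fE : nat -> nat) : Prop :=
  morphism G H fV fE /\
  exists hV hE, morphism H G hV hE /\
    (forall v, v \in gV G -> hV (fV v) = v) /\
    (forall e, e \in gE G -> hE (fE e) = e) /\
    (forall v, v \in gV H -> fV (hV v) = v) /\
    (forall e, e \in gE H -> fE (hE e) = e).

Definition iso (G H : graph) : Prop := exists fV fE, iso_via G H fV fE.

Definition subgraph (K G : graph) : Prop :=
  {subset gV K <= gV G} /\ {subset gE K <= gE G} /\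
  (forall e, e \in gE K ->
     [/\ gsrc K e = gsrc G e, gtgt K e = gtgt G e & gelab K e = gelab G e]) /\
  (forall v a, v \in gV K -> glab K v = Some a -> glab G v = Some a) /\
  (forall v b, v \in gV K -> groot K v = Some b -> groot G v = Some b).

Record rule := Rule { rL : graph; rK : graph; rR : graph }.

Definition wf_rule (r : rule) : Prop :=
  TLRG (rL r) /\ TLRG (rR r) /\ wf (rK r) /\
  subgraph (rK r) (rL r) /\ subgraph (rK r) (rR r).

Definition rule_iso (r1 r2 : rule) : Prop :=
  exists fV fE hV hE,
    iso_via (rL r1) (rL r2) fV fE /\ iso_via (rR r1) (rR r2) hV hE /\
    (forall v, v \in gV (rK r1) -> fV v = hV v) /\
    (forall e, e \in gE (rK r1) -> fE e = hE e) /\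
    (forall v, v \in gV (rK r1) -> fV v \in gV (rK r2)) /\
    (forall v', v' \in gV (rK r2) -> exists v, v \in gV (rK r1) /\ fV v = v') /\
    (forall e, e \in gE (rK r1) -> fE e \in gE (rK r2)) /\
    (forall e', e' \in gE (rK r2) -> exists e, e \in gE (rK r1) /\ fE e = e') /\
    (forall v, v \in gV (rK r1) ->
       glab (rK r2) (fV v) = glab (rK r1) v /\ groot (rK r2) (fV v) = groot (rK r1) v).

Definition rule_nf (r : rule) : rule :=
  Rule (rL r)
       (Graph (gV (rK r)) [::] (gsrc (rK r)) (gtgt (rK r))
              (fun _ => None) (gelab (rK r)) (fun _ => None))
       (rR r).

Definition rule_weq (r1 r2 : rule) : Prop := rule_iso (rule_nf r1) (rule_nf r2).

Definition gts (T : seq rule) : Prop := forall r, List.In r T -> wf_rule r.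

(* injective match satisfying the dangling condition *)
Definition is_match (G : graph) (r : rule) (mV mE : nat -> nat) : Prop :=
  morphism (rL r) G mV mE /\
  {in gV (rL r) &, injective mV} /\ {in gE (rL r) &, injective mE} /\
  (forall e, e \in gE G -> ~ (exists x, x \in gE (rL r) /\ mE x = e) ->
     forall v, v \in gV (rL r) -> v \notin gV (rK r) ->
       gsrc G e <> mV v /\ gtgt G e <> mV v).

(* the result of applying r to G via (mV, mE): old items w of G get id 2w,
   new items x of R not in K get id 2x+1 *)
Definition result (G : graph) (r : rule) (mV mE : nat -> nat) : graph :=
  let L := rL r in let K := rK r in let R := rR r in
  let delV := fun w => has (fun v => (v \notin gV K) && (mV v == w)) (gV L) in
  let delE := fun e => has (fun x => (x \notin gE K) && (mE x == e)) (gE L) in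
  let embR := fun v => if v \in gV K then (mV v).*2 else (v.*2).+1 in
  let kpre := fun w => [seq v <- gV K | mV v == w] in
  Graph
    ([seq w.*2 | w <- gV G & ~~ delV w] ++ [seq (x.*2).+1 | x <- gV R & x \notin gV K])
    ([seq e.*2 | e <- gE G & ~~ delE e] ++ [seq (x.*2).+1 | x <- gE R & x \notin gE K])
    (fun n => if odd n then embR (gsrc R n./2) else (gsrc G n./2).*2)
    (fun n => if odd n then embR (gtgt R n./2) else (gtgt G n./2).*2)
    (fun n => if odd n then glab R n./2 else
       if kpre n./2 is v :: _ then
         (if glab K v is Some _ then glab G n./2 else glab R v)
       else glab G n./2)
    (fun n => if odd n then gelab R n./2 else gelab G n./2)
    (fun n => if odd n then groot R n./2 else
       if kpre n./2 is v :: _ then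
         (if groot K v is Some _ then groot G n./2 else groot R v)
       else groot G n./2).

Definition derive (r : rule) (G H : graph) : Prop :=
  TLRG G /\ exists mV mE, is_match G r mV mE /\ iso (result G r mV mE) H.

(* [G] ->_T [H] (on representatives; invariant under isomorphism) *)
Definition step (T : seq rule) (G H : graph) : Prop :=
  TLRG H /\ exists r, List.In r T /\ derive r G H.

Inductive reach (T : seq rule) : graph -> graph -> Prop :=
| reach_refl G H : iso G H -> reach T G H
| reach_step G G' H : step T G G' -> reach T G' H -> reach T G H.

Definition irreducible (T : seq rule) (H : graph) : Prop :=
  ~ exists H', step T H H'.

Definition normal_form_of (T : seq rule) (G H : graph) : Prop :=
  reach T G H /\ irreducible T H.

Definition infinite_from (T : seq rule) (G : graph) : Prop :=
  exists f : nat -> graph, iso (f 0) G /\ forall n, step T (f n) (f n.+1).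

Definition sys_iso (T1 T2 : seq rule) : Prop :=
  (forall r1, List.In r1 T1 -> exists r2, List.In r2 T2 /\ rule_iso r1 r2) /\
  (forall r2, List.In r2 T2 -> exists r1, List.In r1 T1 /\ rule_iso r1 r2).

Definition sys_normeq (T1 T2 : seq rule) : Prop :=
  (forall r1, List.In r1 T1 -> exists r2, List.In r2 T2 /\ rule_weq r1 r2) /\
  (forall r2, List.In r2 T2 -> exists r1, List.In r1 T1 /\ rule_weq r1 r2).

Definition sys_stepeq (T1 T2 : seq rule) : Prop :=
  forall G H, step T1 G H <-> step T2 G H.

Definition sys_semeq (T1 T2 : seq rule) : Prop :=
  forall G, TLRG G ->
    (forall H, TLRG H -> (normal_form_of T1 G H <-> normal_form_of T2 G H)) /\
    (infinite_from T1 G <-> infinite_from T2 G).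

End GT.

(* Main.v *)
Require Import Defs.
From mathcomp Require Import all_boot.
Set Implicit Arguments. Unset Strict Implicit. Unset Printing Implicit Defensive.


Section Gen.
Variables (LV LE : finType).
Implicit Types G H : graph LV LE.

Lemma parity_ind (P : nat -> Prop) :
  (forall w, P w.*2) -> (forall w, P (w.*2).+1) -> forall n, P n.
Proof.
move=> H0 H1 n; rewrite -[n]odd_double_half.
by case: (odd n); rewrite ?add1n ?add0n.
Qed.

Lemma half2S w : ((w.*2).+1)./2 = w.
Proof. by rewrite /= uphalf_double. Qed.
Lemma odd2S w : odd (w.*2).+1.
Proof. by rewrite /= odd_double. Qed.

Lemma memE2 (s : seq nat) (p : pred nat) w :
  (w.*2 \in [seq x.*2 | x <- s & p x]) = p w && (w \in s).
Proof. by rewrite mem_map ?mem_filter //; exact: double_inj. Qed.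
Lemma memE2O (s : seq nat) (p : pred nat) w :
  (w.*2 \in [seq (x.*2).+1 | x <- s & p x]) = false.
Proof.
apply/mapP=> [[x _ E]]; have := congr1 odd E; by rewrite odd2S odd_double.
Qed.
Lemma memO2 (s : seq nat) (p : pred nat) w :
  ((w.*2).+1 \in [seq (x.*2).+1 | x <- s & p x]) = p w && (w \in s).
Proof. by rewrite mem_map ?mem_filter // => x y [] /double_inj. Qed.
Lemma memO2E (s : seq nat) (p : pred nat) w :
  ((w.*2).+1 \in [seq x.*2 | x <- s & p x]) = false.
Proof.
apply/mapP=> [[x _ E]]; have := congr1 odd E; by rewrite odd2S odd_double.
Qed.

Lemma iso_bij G H fV fE hV hE :
 (forall v, v \in gV G -> fV v \in gV H) -> (forall v, v \in gV H -> hV v \in gV G) ->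
 (forall v, v \in gV G -> hV (fV v) = v) -> (forall v, v \in gV H -> fV (hV v) = v) ->
 (forall v, v \in gE G -> fE v \in gE H) -> (forall v, v \in gE H -> hE v \in gE G) ->
 (forall v, v \in gE G -> hE (fE v) = v) -> (forall v, v \in gE H -> fE (hE v) = v) ->
 (forall e, e \in gE G -> [/\ gsrc H (fE e) = fV (gsrc G e),
      gtgt H (fE e) = fV (gtgt G e) & gelab H (fE e) = gelab G e]) ->
 (forall e, e \in gE H -> gsrc G (hE e) = hV (gsrc H e) /\ gtgt G (hE e) = hV (gtgt H e)) ->
 (forall v, v \in gV G -> glab H (fV v) = glab G v /\ groot H (fV v) = groot G v) ->
 iso_via G H fV fE.
Proof.
move=> V1 V2 V3 V4 E1 E2 E3 E4 S S' Lb.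
split.
  split=> //; split; first by move=> e /[dup] eG /S [-> -> ->]; split=> //; exact: E1.
  by split=> v a vG; [have [-> _] := Lb v vG | have [_ ->] := Lb v vG].
exists hV, hE; split=> //.
split=> //; split.
  move=> e eH; have [-> ->] := S' e eH; split=> //; first exact: E2.
  by have [_ _ <-] := S _ (E2 _ eH); rewrite E4.
by split=> v a vH; [have [<- _] := Lb _ (V2 _ vH) | have [_ <-] := Lb _ (V2 _ vH)]; rewrite V4.
Qed.

Lemma morph_comp G H K f1 f2 g1 g2 :
  morphism G H f1 f2 -> morphism H K g1 g2 ->
  morphism G K (fun v => g1 (f1 v)) (fun e => g2 (f2 e)).
Proof.
move=> [a1 [b1 [c1 d1]]] [a2 [b2 [c2 d2]]]; split; first by move=> v /a1 /a2.
split; first by move=> e /b1 [/[dup] eH /b2 [? -> -> ->] -> -> ->].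
split; first by move=> v a /[dup] vG /a1 vH /(c1 _ _ vG) /(c2 _ _ vH).
by move=> v a /[dup] vG /a1 vH /(d1 _ _ vG) /(d2 _ _ vH).
Qed.

Lemma iso_refl G : iso G G.
Proof.
exists id, id; split; first by do 3?split=> //; move=> e eG; split.
by exists id, id; split=> //; do 3?split=> //; move=> e eG; split.
Qed.

Lemma iso_sym G H : iso G H -> iso H G.
Proof.
move=> [fV [fE [M [hV [hE [M' [a [b [c d]]]]]]]]].
by exists hV, hE; split=> //; exists fV, fE.
Qed.

Lemma iso_trans G H K : iso G H -> iso H K -> iso G K.
Proof.
move=> [fV [fE [M [hV [hE [M' [a [b [c d]]]]]]]]].
move=> [fV2 [fE2 [N [hV2 [hE2 [N' [a2 [b2 [c2 d2]]]]]]]]].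
exists (fun v => fV2 (fV v)), (fun e => fE2 (fE e)); split; first exact: (morph_comp M N).
exists (fun v => hV (hV2 v)), (fun e => hE (hE2 e)); split; first exact: (morph_comp N' M').
have [mV [mE _]] := M; have [mV' [mE' _]] := N'.
split; first by move=> v vG; rewrite a2 ?a //; apply: M.1.
split; first by move=> e eG; rewrite b2 ?b //; have [] := mE _ eG.
split; first by move=> v vK; rewrite c ?c2 //; apply: mV'.
by move=> e eK; rewrite d ?d2 //; have [] := mE' _ eK.
Qed.

End Gen.


Section NF.
Variables (LV LE : finType).
Implicit Types G H : graph LV LE.

Lemma result_nf_iso G (r : rule LV LE) mV mE : wf_rule r -> TLRG G -> is_match G r mV mE ->
  iso (result G r mV mE) (result G (rule_nf r) mV mE).
Proof.
case: r => L K R [TL [TR [wfK [sKL sKR]]]] TG [[mVin [mEin [mlab mroot]]] [injV [injE dang]]].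
simpl in *.
pose p e := fun x => mE x == e.
pose fE n := if odd n then n else if has (p n./2) (gE K)
   then ((nth 0 (gE K) (find (p n./2) (gE K))).*2).+1 else n.
pose hE n := if odd n && (n./2 \in gE K) then (mE n./2).*2 else n.
have [sKLV [sKLE [sKLe [sKLl sKLr]]]] := sKL.
have [sKRV [sKRE [sKRe [sKRl sKRr]]]] := sKR.
have keyE x : x \in gE K -> fE (mE x).*2 = (x.*2).+1.
  move=> xK; rewrite /fE odd_double doubleK.
  have hx : has (p (mE x)) (gE K) by apply/hasP; exists x => //; rewrite /p.
  rewrite hx; set y := nth _ _ _.
  have yK : y \in gE K by rewrite mem_nth // -has_find.
  have := nth_find 0 hx; rewrite -/y /p => /eqP /injE -> //; exact: sKLE.
have noimg e : ~~ has (p e) (gE K) -> fE e.*2 = e.*2.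
  by move=> /negbTE he; rewrite /fE odd_double doubleK he.
pose delE e := has (fun x => (x \notin gE K) && (mE x == e)) (gE L).
pose imgL e := has (fun x => mE x == e) (gE L).
have F1 x : x \in gE K -> ~~ delE (mE x).
  move=> xK; apply/hasP => [[y yL /andP [yK /eqP E]]].
  by have := injE y x yL (sKLE x xK) E => Eyx; rewrite Eyx xK in yK.
have F2 e : ~~ delE e -> ~~ has (p e) (gE K) -> ~~ imgL e.
  move=> hd hk; apply/hasP => [[y yL E]]; case yK: (y \in gE K).
    by move/hasP: hk; apply; exists y.
  by move/hasP: hd; apply; exists y => //; rewrite yK.
have F3 e : ~~ imgL e -> ~~ has (p e) (gE K).
  by move=> hi; apply/hasP => [[y yK E]]; move/hasP: hi; apply; exists y => //; exact: sKLE.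
have F4 e : ~~ imgL e -> ~~ delE e.
  by move=> hi; apply/hasP => [[y yL /andP [_ E]]]; move/hasP: hi; apply; exists y.
have fEo w : fE (w.*2).+1 = (w.*2).+1 by rewrite /fE odd2S.
have hEe w : hE w.*2 = w.*2 by rewrite /hE odd_double.
have hEo w : hE (w.*2).+1 = if w \in gE K then (mE w).*2 else (w.*2).+1.
  by rewrite /hE odd2S half2S.
exists id, fE; apply: (iso_bij (hV := id) (hE := hE)) => //.
all: rewrite /result /=.
- elim/parity_ind => w; rewrite !mem_cat ?memE2 ?memE2O ?memO2 ?memO2E ?orbF //=.
    move=> /andP [hd wG]; case hk: (has (p w) (gE K)).
      move/hasP: hk => [x xK /eqP E]; rewrite -E keyE // memO2E memO2 /=.
      exact: sKRE.
    by rewrite noimg ?hk // memE2 memE2O wG andbT orbF; apply: F2 => //; rewrite hk.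
  by move=> /andP [xK xR]; rewrite fEo memO2 xR orbT.
- elim/parity_ind => w; rewrite !mem_cat ?memE2 ?memE2O ?memO2 ?memO2E ?orbF //=.
    move=> /andP [hi wG]; rewrite hEe /= memE2 memE2O wG andbT orbF; exact: F4.
  move=> xR; rewrite hEo /=; case xK: (w \in gE K).
    rewrite memE2 memE2O F1 //= orbF; by have [] := mEin w (sKLE w xK).
  by rewrite memO2E memO2 xK xR.
- elim/parity_ind => w; rewrite !mem_cat ?memE2 ?memE2O ?memO2 ?memO2E ?orbF //=.
    move=> /andP [hd wG]; case hk: (has (p w) (gE K)).
      move/hasP: hk => [x xK /eqP E]; rewrite -E keyE // hEo xK.
      by [].
    by rewrite noimg ?hk // hEe.
  by move=> /andP [xK xR]; rewrite fEo hEo (negbTE xK).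
- elim/parity_ind => w; rewrite !mem_cat ?memE2 ?memE2O ?memO2 ?memO2E ?orbF //=.
    by move=> /andP [hi wG]; rewrite hEe /= noimg //; exact: F3.
  move=> xR; rewrite hEo /=; case xK: (w \in gE K).
    by rewrite keyE.
  by rewrite fEo.
- elim/parity_ind => w; rewrite !mem_cat ?memE2 ?memE2O ?memO2 ?memO2E ?orbF //=.
    move=> /andP [hd wG]; case hk: (has (p w) (gE K)).
      move/hasP: hk => [x xK /eqP E]; rewrite -E keyE // odd2S half2S odd_double doubleK.
      have [sK tK lK] := sKRe x xK; have [sL tL lL] := sKLe x xK.
      have [_ sG tG lG] := mEin x (sKLE x xK); have [s1 t1] := wfK x xK.
      by rewrite -sK -tK s1 t1 sG tG -sL -tL -lK lG lL.
    by rewrite noimg ?hk.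
  by move=> /andP [xK xR]; rewrite fEo.
- elim/parity_ind => w; rewrite !mem_cat ?memE2 ?memE2O ?memO2 ?memO2E ?orbF //=.
    by move=> /andP [hi wG]; rewrite hEe.
  move=> xR; rewrite hEo /=; case xK: (w \in gE K) => //.
  rewrite !odd_double ?doubleK /= ?uphalf_double ?odd_double /=.
  have [sK tK lK] := sKRe w xK; have [sL tL lL] := sKLe w xK.
  have [_ sG tG lG] := mEin w (sKLE w xK); have [s1 t1] := wfK w xK.
  by rewrite -sK -tK s1 t1 sG tG -sL -tL.
- elim/parity_ind => w _; first last.
    by rewrite odd2S.
  rewrite odd_double doubleK.
  case E: [seq v <- gV K | mV v == w] => [|u s] //.
  have : u \in u :: s by rewrite mem_head.
  rewrite -E mem_filter => /andP [/eqP mu uK].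
  split.
    case Lu: (glab K u) => [a|] //.
    by rewrite (sKRl u a uK Lu) -mu (mlab u a (sKLV u uK) (sKLl u a uK Lu)).
  case Lu: (groot K u) => [a|] //.
  by rewrite (sKRr u a uK Lu) -mu (mroot u a (sKLV u uK) (sKLr u a uK Lu)).
Qed.

End NF.


Ltac msimp := rewrite ?mem_cat ?memE2 ?memE2O ?memO2 ?memO2E ?orbF ?orFb ?andTb.

Section TR.
Variables (LV LE : finType).
Implicit Types G H : graph LV LE.

Lemma tlrg_lab (R : graph LV LE) v : TLRG R -> v \in gV R ->
  exists a b, glab R v = Some a /\ groot R v = Some b.
Proof.
move=> [_ T] vR; have [] := T v vR.
by case: (glab R v) => [a|] // _; case: (groot R v) => [b|] // _; exists a, b.
Qed.

Lemma transfer G (r1 r2 : rule LV LE) mV mE : wf_rule r1 -> wf_rule r2 -> TLRG G ->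
  rule_iso (rule_nf r1) (rule_nf r2) -> is_match G r1 mV mE ->
  exists mV' mE', is_match G r2 mV' mE' /\
    iso (result G (rule_nf r1) mV mE) (result G (rule_nf r2) mV' mE').
Proof.
case: r1 => L1 K1 R1; case: r2 => L2 K2 R2.
move=> [TL1 [TR1 [wfK1 [sKL1 sKR1]]]] [TL2 [TR2 [wfK2 [sKL2 sKR2]]]] TG.
move=> [fV [fE [hV [hE [ [Lm [iV [iE [Lm' [gf [gfE [fg fgE]]]]]]] [ [Rm [jV [jE [Rm' [jh [jhE [hj hjE]]]]]]] [agV [_ [fK [fKo _]]]]]]]]]].
move=> [M [injV [injE dang]]].
simpl in *.
have [sKLV1 _] := sKL1; have [sKRV1 _] := sKR1.
have [sKLV2 _] := sKL2; have [sKRV2 _] := sKR2.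
have [LVin [LEin [Llab Lroot]]] := Lm; have [LVin' [LEin' _]] := Lm'.
have [RVin [REin [Rlab Rroot]]] := Rm; have [RVin' [REin' _]] := Rm'.
have [wR1 _] := TR1; have [wR2 _] := TR2.
have keyK1 v : v \in gV L1 -> (fV v \in gV K2) = (v \in gV K1).
  move=> vL; apply/idP/idP; last exact: fK.
  move=> /fKo [u [uK E]]; have := congr1 iV E; rewrite gf ?(sKLV1 _ uK) // gf // => <-.
  by [].
have keyKR v : v \in gV R1 -> (hV v \in gV K2) = (v \in gV K1).
  move=> vR; apply/idP/idP; last by move=> vK; rewrite -agV // fK.
  move=> /fKo [u [uK E]]; rewrite agV // in E.
  by have := congr1 jV E; rewrite jh ?(sKRV1 _ uK) // jh // => <-.
have keyK2 y : y \in gV L2 -> (iV y \in gV K1) = (y \in gV K2).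
  by move=> yL; rewrite -keyK1 ?fg //; apply: LVin'.
have keyKR2 y : y \in gV R2 -> (jV y \in gV K1) = (y \in gV K2).
  by move=> yR; rewrite -keyKR ?hj //; apply: RVin'.
exists (fun v => mV (iV v)), (fun e => mE (iE e)); split.
  split; first exact: morph_comp Lm' M.
  split.
    move=> u v uL vL E; have E' := injV _ _ (LVin' _ uL) (LVin' _ vL) E.
    by rewrite -(fg u) // -(fg v) // E'.
  split.
    move=> u v uL vL E.
    have [uL' _ _ _] := LEin' _ uL; have [vL' _ _ _] := LEin' _ vL.
    have E' := injE _ _ uL' vL' E.
    by rewrite -(fgE u) // -(fgE v) // E'.
  move=> e eG Hn y yL yK; apply: dang => //.
    move=> [x [xL E]]; apply: Hn; exists (fE x); have [? _ _ _] := LEin x xL.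
    by rewrite gfE.
  exact: LVin'.
  by rewrite keyK2 ?yK.
pose FV n := if odd n then ((hV n./2).*2).+1 else n.
pose HV n := if odd n then ((jV n./2).*2).+1 else n.
pose FE n := if odd n then ((hE n./2).*2).+1 else n.
pose HE n := if odd n then ((jE n./2).*2).+1 else n.
have FVe w : FV w.*2 = w.*2 by rewrite /FV odd_double.
have HVe w : HV w.*2 = w.*2 by rewrite /HV odd_double.
have FEe w : FE w.*2 = w.*2 by rewrite /FE odd_double.
have HEe w : HE w.*2 = w.*2 by rewrite /HE odd_double.
have FVo w : FV (w.*2).+1 = ((hV w).*2).+1 by rewrite /FV odd2S half2S.
have HVo w : HV (w.*2).+1 = ((jV w).*2).+1 by rewrite /HV odd2S half2S.
have FEo w : FE (w.*2).+1 = ((hE w).*2).+1 by rewrite /FE odd2S half2S.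
have HEo w : HE (w.*2).+1 = ((jE w).*2).+1 by rewrite /HE odd2S half2S.
have delV w : has (fun v => (v \notin gV K2) && (mV (iV v) == w)) (gV L2) =
              has (fun v => (v \notin gV K1) && (mV v == w)) (gV L1).
  apply/hasP/hasP.
    move=> [y yL /andP [yK E]]; exists (iV y); first exact: LVin'.
    by rewrite keyK2 // yK.
  move=> [v vL /andP [vK E]]; exists (fV v); first exact: LVin.
  by rewrite keyK1 // vK gf.
have delE w : has (fun x => mE (iE x) == w) (gE L2) = has (fun x => mE x == w) (gE L1).
  apply/hasP/hasP.
    by move=> [y yL E]; exists (iE y) => //; have [] := LEin' y yL.
  move=> [v vL E]; exists (fE v); first by have [] := LEin v vL.
  by rewrite gfE.
have ihK v : v \in gV K1 -> iV (hV v) = v.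
  by move=> vK; rewrite -agV // gf // sKLV1.
have jiK y : y \in gV K2 -> jV y = iV y.
  by move=> /fKo [u [uK <-]]; rewrite agV // jh ?sKRV1 // ihK.
exists FV, FE; apply: (iso_bij (hV := HV) (hE := HE)); rewrite /result /=.

- elim/parity_ind => w; msimp.
    by move=> /andP [hd wG]; rewrite FVe; msimp; rewrite delV hd wG.
  by move=> /andP [xK xR]; rewrite FVo; msimp; rewrite keyKR // xK RVin.
- elim/parity_ind => w; msimp.
    by move=> /andP [hd wG]; rewrite HVe; msimp; rewrite -delV hd wG.
  by move=> /andP [yK yR]; rewrite HVo; msimp; rewrite keyKR2 // yK RVin'.
- elim/parity_ind => w; msimp.
    by move=> _; rewrite FVe HVe.
  by move=> /andP [_ xR]; rewrite FVo HVo jh.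
- elim/parity_ind => w; msimp.
    by move=> _; rewrite HVe FVe.
  by move=> /andP [_ xR]; rewrite HVo FVo hj.
- elim/parity_ind => w; msimp.
    by move=> /andP [hd wG]; rewrite FEe; msimp; rewrite delE hd wG.
  by move=> xR; rewrite FEo; msimp; have [-> _ _ _] := REin _ xR.
- elim/parity_ind => w; msimp.
    by move=> /andP [hd wG]; rewrite HEe; msimp; rewrite -delE hd wG.
  by move=> xR; rewrite HEo; msimp; have [-> _ _ _] := REin' _ xR.
- elim/parity_ind => w; msimp.
    by move=> _; rewrite FEe HEe.
  by move=> xR; rewrite FEo HEo jhE.
- elim/parity_ind => w; msimp.
    by move=> _; rewrite HEe FEe.
  by move=> xR; rewrite HEo FEo hjE.
- elim/parity_ind => w; msimp.
    by move=> _; rewrite FEe !odd_double !doubleK !FVe.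
  move=> xR; rewrite FEo !odd2S !half2S.
  have [_ s2 t2 l2] := REin w xR; rewrite s2 t2 l2.
  have [s1 t1] := wR1 w xR; rewrite !keyKR //.
  split; last by [].
    by case sK: (gsrc R1 w \in gV K1); rewrite ?FVe ?FVo ?ihK.
  by case sK: (gtgt R1 w \in gV K1); rewrite ?FVe ?FVo ?ihK.
- elim/parity_ind => w; msimp.
    by move=> _; rewrite HEe !odd_double !doubleK !HVe.
  move=> yR; rewrite HEo !odd2S !half2S.
  have [_ s2 t2 _] := REin' w yR; rewrite s2 t2.
  have [s1 t1] := wR2 w yR; rewrite !keyKR2 //.
  split.
    by case sK: (gsrc R2 w \in gV K2); [rewrite HVe jiK | rewrite HVo].
  by case sK: (gtgt R2 w \in gV K2); [rewrite HVe jiK | rewrite HVo].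
- elim/parity_ind => w; msimp.
    move=> _; rewrite FVe !odd_double !doubleK.
    case E1: [seq v <- gV K1 | mV v == w] => [|u s1];
      case E2: [seq v <- gV K2 | mV (iV v) == w] => [|u' s2] //.
    + have : u' \in u' :: s2 by rewrite mem_head.
      rewrite -E2 mem_filter => /andP [/eqP mu uK].
      have [u0 [u0K Eu]] := fKo u' uK.
      have : u0 \in [seq v <- gV K1 | mV v == w].
        by rewrite mem_filter -mu -Eu gf ?eqxx ?u0K ?sKLV1.
      by rewrite E1.
    + have : u \in u :: s1 by rewrite mem_head.
      rewrite -E1 mem_filter => /andP [/eqP mu uK].
      have : fV u \in [seq v <- gV K2 | mV (iV v) == w].
        by rewrite mem_filter fK // gf ?sKLV1 // mu eqxx.
      by rewrite E2.
    + have : u' \in u' :: s2 by rewrite mem_head.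
      rewrite -E2 mem_filter => /andP [/eqP mu uK].
      have : u \in u :: s1 by rewrite mem_head.
      rewrite -E1 mem_filter => /andP [/eqP mu1 u1K].
      have [u0 [u0K Eu]] := fKo u' uK.
      rewrite -Eu gf ?sKLV1 // in mu.
      have Eu0 : u0 = u by apply: injV; rewrite ?sKLV1 // mu mu1.
      rewrite -Eu Eu0 agV //.
      have [a [b [Ea Eb]]] := tlrg_lab TR1 (sKRV1 _ u1K).
      by rewrite Ea Eb (Rlab _ _ (sKRV1 _ u1K) Ea) (Rroot _ _ (sKRV1 _ u1K) Eb).
  move=> /andP [_ xR]; rewrite FVo !odd2S !half2S.
  have [a [b [Ea Eb]]] := tlrg_lab TR1 xR.
  by rewrite Ea Eb (Rlab _ _ xR Ea) (Rroot _ _ xR Eb).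
Qed.

End TR.


Section Main.
Variables (LV LE : finType).
Implicit Types G H : graph LV LE.
Implicit Types r : rule LV LE.

Lemma derive_to_nf r G H : wf_rule r -> derive r G H -> derive (rule_nf r) G H.
Proof.
move=> W [TG [mV [mE [M I]]]]; split=> //; exists mV, mE; split; first exact: M.
exact: iso_trans (iso_sym (result_nf_iso W TG M)) I.
Qed.

Lemma derive_of_nf r G H : wf_rule r -> derive (rule_nf r) G H -> derive r G H.
Proof.
move=> W [TG [mV [mE [M I]]]]; have M' : is_match G r mV mE := M.
split=> //; exists mV, mE; split; first exact: M'.
exact: iso_trans (result_nf_iso W TG M') I.
Qed.

Lemma derive_weq r1 r2 G H : wf_rule r1 -> wf_rule r2 -> rule_weq r1 r2 ->
  derive r1 G H -> derive r2 G H.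
Proof.
move=> W1 W2 Wq /(derive_to_nf W1) [TG [mV [mE [M I]]]].
have M' : is_match G r1 mV mE := M.
have [mV' [mE' [M2 J]]] := transfer W1 W2 TG Wq M'.
apply: (derive_of_nf W2); split=> //; exists mV', mE'; split; first exact: M2.
exact: iso_trans (iso_sym J) I.
Qed.

Lemma rule_iso_sym r1 r2 :
  {subset gV (rK r1) <= gV (rL r1)} -> {subset gV (rK r1) <= gV (rR r1)} ->
  {subset gE (rK r1) <= gE (rL r1)} -> {subset gE (rK r1) <= gE (rR r1)} ->
  rule_iso r1 r2 -> rule_iso r2 r1.
Proof.
move=> sKL sKR sKLE sKRE.
move=> [fV [fE [hV [hE [ [Lm [iV [iE [Lm' [a1 [a2 [a3 a4]]]]]]] [ [Rm [jV [jE [Rm' [b1 [b2 [b3 b4]]]]]]] [agV [agE [fK [fKo [fKE [fKEo lab]]]]]]]]]]]].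
exists iV, iE, jV, jE.
split; first by split=> //; exists fV, fE.
split; first by split=> //; exists hV, hE.
split; first by move=> v /fKo [u [uK <-]]; rewrite a1 ?sKL // agV // b1 ?sKR.
split; first by move=> e /fKEo [x [xK <-]]; rewrite a2 ?sKLE // agE // b2 ?sKRE.
split; first by move=> v /fKo [u [uK <-]]; rewrite a1 ?sKL.
split; first by move=> v vK; exists (fV v); split; [exact: fK | rewrite a1 ?sKL].
split; first by move=> e /fKEo [x [xK <-]]; rewrite a2 ?sKLE.
split; first by move=> e eK; exists (fE e); split; [exact: fKE | rewrite a2 ?sKLE].
move=> v /fKo [u [uK <-]]; rewrite a1 ?sKL //; have [l r] := lab u uK.
by rewrite l r.
Qed.

Lemma rule_weq_sym r1 r2 : wf_rule r1 -> rule_weq r1 r2 -> rule_weq r2 r1.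
Proof.
move=> [_ [_ [_ [[sKL _] [sKR _]]]]] W; apply: rule_iso_sym W => //.
Qed.

Lemma iso_weq r1 r2 : rule_iso r1 r2 -> rule_weq r1 r2.
Proof.
move=> [fV [fE [hV [hE [IL [IR [agV [agE [fK [fKo [fKE [fKEo lab]]]]]]]]]]]].
by exists fV, fE, hV, hE; do !split=> //.
Qed.

Lemma reach_eq T1 T2 : sys_stepeq T1 T2 -> forall G H, reach T1 G H -> reach T2 G H.
Proof.
move=> E G H; elim=> [G0 H0 I | G0 G' H0 S _ IH]; first exact: reach_refl.
by apply: reach_step IH; apply/E.
Qed.

Lemma part1 (T1 T2 : seq (rule LV LE)) : gts T1 -> gts T2 ->
     (sys_iso T1 T2 -> sys_normeq T1 T2) /\
     (sys_normeq T1 T2 -> sys_stepeq T1 T2) /\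
     (sys_stepeq T1 T2 -> sys_semeq T1 T2).
Proof.
move=> g1 g2; split.
  move=> [I1 I2]; split.
    by move=> r1 /I1 [r2 [? ?]]; exists r2; split=> //; exact: iso_weq.
  by move=> r2 /I2 [r1 [? ?]]; exists r1; split=> //; exact: iso_weq.
split.
  move=> [N1 N2] G H; split; move=> [TH [r [rin D]]]; split=> //.
    have [r2 [r2in W]] := N1 r rin; exists r2; split=> //.
    exact: derive_weq (g1 r rin) (g2 r2 r2in) W D.
  have [r1 [r1in W]] := N2 r rin; exists r1; split=> //.
  apply: derive_weq (g2 r rin) (g1 r1 r1in) _ D.
  exact: rule_weq_sym (g1 r1 r1in) W.
move=> E; have E' : sys_stepeq T2 T1 by move=> G H; apply: iff_sym.
move=> G TG; split.
  move=> H TH; split; move=> [R Irr]; split.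
  - exact: reach_eq E _ _ R.
  - by move=> [H' S]; apply: Irr; exists H'; apply/E.
  - exact: reach_eq E' _ _ R.
  - by move=> [H' S]; apply: Irr; exists H'; apply/E.
split; move=> [f [I S]]; exists f; split=> // n; apply/E; exact: S.
Qed.

End Main.


Section IdRules.
Variables (LV LE : finType).
Implicit Types G H : graph LV LE.

Lemma id_result G (K : graph LV LE) mV mE : TLRG K -> iso (result G (Rule K K K) mV mE) G.
Proof.
move=> TK.
have hasF w : has (fun v => (v \notin gV K) && (mV v == w)) (gV K) = false.
  by apply/hasP => [[v vK /andP [nvK _]]]; rewrite vK in nvK.
have hasFE w : has (fun v => (v \notin gE K) && (mE v == w)) (gE K) = false.
  by apply/hasP => [[v vK /andP [nvK _]]]; rewrite vK in nvK.
exists half, half; apply: (iso_bij (hV := double) (hE := double)); rewrite /result /=.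
- elim/parity_ind => w; msimp; rewrite ?hasF /= ?doubleK //.
  by case/andP=> /negP.
- by move=> v vG; msimp; rewrite hasF.
- elim/parity_ind => w; msimp; rewrite ?doubleK //.
  by case/andP=> /negP.
- by move=> v _; rewrite doubleK.
- elim/parity_ind => w; msimp; rewrite ?hasFE /= ?doubleK //.
  by case/andP=> /negP.
- by move=> v vG; msimp; rewrite hasFE.
- elim/parity_ind => w; msimp; rewrite ?doubleK //.
  by case/andP=> /negP.
- by move=> v _; rewrite doubleK.
- elim/parity_ind => w; msimp; last by case/andP=> /negP.
  by move=> _; rewrite !odd_double !doubleK.
- by move=> e _; rewrite !odd_double !doubleK.
- elim/parity_ind => w; msimp; last by case/andP=> /negP.
  move=> _; rewrite odd_double !doubleK.
  case E: [seq v <- gV K | mV v == w] => [|u s] //.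
  have : u \in u :: s by rewrite mem_head.
  rewrite -E mem_filter => /andP [_ uK].
  by have [a [b [Ea Eb]]] := tlrg_lab TK uK; rewrite Ea Eb.
Qed.

End IdRules.

Definition U := unit.
Definition g0 : graph unit unit := Graph [::] [::] id id (fun _ => None) (fun _ => tt) (fun _ => None).
Definition g1 : graph unit unit := Graph [:: 0] [::] id id (fun _ => Some tt) (fun _ => tt) (fun _ => Some false).
Definition idE : rule unit unit := Rule g0 g0 g0.
Definition idN : rule unit unit := Rule g1 g1 g1.
Definition addN : rule unit unit := Rule g0 g0 g1.

Lemma TLRG_g0 : TLRG g0.
Proof. by split=> ?; rewrite in_nil. Qed.
Lemma TLRG_g1 : TLRG g1.
Proof. by split=> [? | ? _]; rewrite ?in_nil. Qed.

Lemma subgraph_refl (G : graph unit unit) : subgraph G G.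
Proof. by do !split=> //. Qed.
Lemma subgraph_g0 (G : graph unit unit) : subgraph g0 G.
Proof. by do !split=> //; move=> ?; rewrite in_nil. Qed.

Lemma match_empty (G : graph unit unit) (K R : graph unit unit) mV mE :
  is_match G (Rule g0 K R) mV mE.
Proof. by do !split=> //; move=> ?; rewrite in_nil. Qed.

Lemma wf_idE : wf_rule idE.
Proof. by split; [|split; [|split; [|split]]]; try exact: TLRG_g0; try exact: subgraph_refl; case: TLRG_g0. Qed.
Lemma wf_idN : wf_rule idN.
Proof. by split; [|split; [|split; [|split]]]; try exact: TLRG_g1; try exact: subgraph_refl; case: TLRG_g1. Qed.
Lemma wf_addN : wf_rule addN.
Proof. by split; [|split; [|split; [|split]]]; try exact: TLRG_g0; try exact: TLRG_g1; try exact: subgraph_refl; try exact: subgraph_g0; case: TLRG_g0. Qed.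
Lemma wf_nfidN : wf_rule (rule_nf idN).
Proof.
split; [|split; [|split; [|split]]]; try exact: TLRG_g1; try by move=> ?; rewrite in_nil.
  by do !split=> //; move=> ?; rewrite in_nil.
by do !split=> //; move=> ?; rewrite in_nil.
Qed.

Lemma derive_idE (G : graph unit unit) : TLRG G -> derive idE G G.
Proof.
move=> TG; split=> //; exists id, id; split; first exact: match_empty.
exact: id_result TLRG_g0.
Qed.

Lemma step_idE T (G : graph unit unit) : List.In idE T -> TLRG G -> step T G G.
Proof. by move=> iT TG; split=> //; exists idE; split=> //; exact: derive_idE. Qed.

Lemma rule_iso_refl (r : rule unit unit) : rule_iso r r.
Proof.
have I G : iso_via G G id id.
  by split; [do !split => // | exists id, id; do !split].
exists id, id, id, id; do 2 (split; first exact: I).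
do !split=> //.
- by move=> v vK; exists v.
- by move=> e eK; exists e.
Qed.


Lemma ex1 : exists (T1 T2 : seq (rule unit unit)),
     gts T1 /\ gts T2 /\ sys_normeq T1 T2 /\ ~ sys_iso T1 T2.
Proof.
exists [:: idN], [:: rule_nf idN]; split.
  by move=> r [<-|[]]; exact: wf_idN.
split; first by move=> r [<-|[]]; exact: wf_nfidN.
split.
  split=> r [<-|[]].
    by exists (rule_nf idN); split; [left | exact: rule_iso_refl].
  by exists idN; split; [left | exact: rule_iso_refl].
move=> [H _]; have [r2 [[<-|[]] I]] := H idN (or_introl erefl).
move: I => [fV [fE [hV [hE [_ [_ [_ [_ [_ [_ [_ [_ lab]]]]]]]]]]]].
by have [E _] := lab 0 (mem_head _ _).
Qed.

Lemma ex2 : exists (T1 T2 : seq (rule unit unit)),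
     gts T1 /\ gts T2 /\ sys_stepeq T1 T2 /\ ~ sys_normeq T1 T2.
Proof.
exists [:: idE], [:: idE; idN]; split.
  by move=> r [<-|[]]; exact: wf_idE.
split; first by move=> r [<-|[<-|[]]]; [exact: wf_idE | exact: wf_idN].
split.
  move=> G H; split; move=> [TH [r [rin D]]]; split=> //; exists idE; split; try by left.
    by case: rin D => [<-|[]].
  case: rin D => [<- //|[<-|[]]].
  move=> [TG [mV [mE [_ I]]]]; split=> //; exists id, id; split; first exact: match_empty.
  apply: iso_trans (id_result _ _ _ TLRG_g0) _.
  exact: iso_trans (iso_sym (id_result _ _ _ TLRG_g1)) I.
move=> [_ N2]; have [r1 [[<-|[]] W]] := N2 idN (or_intror (or_introl erefl)).
move: W => [fV [fE [hV [hE [ [_ [iV [iE [M' _]]]] _]]]]].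
by have := M'.1 0 (mem_head _ _).
Qed.

Lemma ex3 : exists (T1 T2 : seq (rule unit unit)),
     gts T1 /\ gts T2 /\ sys_semeq T1 T2 /\ ~ sys_stepeq T1 T2.
Proof.
exists [:: idE], [:: idE; addN]; split.
  by move=> r [<-|[]]; exact: wf_idE.
split; first by move=> r [<-|[<-|[]]]; [exact: wf_idE | exact: wf_addN].
split.
  move=> G TG; split.
    move=> H TH; split; move=> [_ Irr]; exfalso; apply: Irr; exists H;
      by apply: step_idE => //; left.
  split=> _; exists (fun _ => G); split; try exact: iso_refl;
    by move=> n; apply: step_idE => //; left.
move=> E.
set H := result g0 addN id id.
have TH : TLRG H.
  split; first by move=> e; rewrite /= in_nil.
  by move=> v; rewrite /= inE => /eqP ->.
have S2 : step [:: idE; addN] g0 H.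
  split=> //; exists addN; split; first by right; left.
  split; first exact: TLRG_g0.
  by exists id, id; split; [exact: match_empty | exact: iso_refl].
have := (E g0 H).2 S2 => [[_ [r [[<-|[]] [_ [mV [mE [_ I]]]]]]]].
move: I => [fV [fE [_ [hV [hE [M' _]]]]]].
by have := M'.1 1 (mem_head _ _).
Qed.


Theorem theorem3p4 :
  (forall (LV LE : finType) (T1 T2 : seq (rule LV LE)), gts T1 -> gts T2 ->
     (sys_iso T1 T2 -> sys_normeq T1 T2) /\
     (sys_normeq T1 T2 -> sys_stepeq T1 T2) /\
     (sys_stepeq T1 T2 -> sys_semeq T1 T2)) /\
  (exists (LV LE : finType) (T1 T2 : seq (rule LV LE)),
     gts T1 /\ gts T2 /\ sys_normeq T1 T2 /\ ~ sys_iso T1 T2) /\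
  (exists (LV LE : finType) (T1 T2 : seq (rule LV LE)),
     gts T1 /\ gts T2 /\ sys_stepeq T1 T2 /\ ~ sys_normeq T1 T2) /\
  (exists (LV LE : finType) (T1 T2 : seq (rule LV LE)),
     gts T1 /\ gts T2 /\ sys_semeq T1 T2 /\ ~ sys_stepeq T1 T2).
Proof.
split; first by move=> LV LE T1 T2; exact: part1.
split; first by have [T1 [T2 H]] := ex1; exists unit, unit, T1, T2.
split; first by have [T1 [T2 H]] := ex2; exists unit, unit, T1, T2.
by have [T1 [T2 H]] := ex3; exists unit, unit, T1, T2.
Qed.
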